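(* In $\mathfrak A_n$, for $i=1,\dots,n-1$, with $F_i=\tau_i(\pi_i^2-\pi_{i+1}^2)+(\pi_{i+1}-\pi_i)$, the following hold: $\tau_i\pi_i+\pi_{i+1}\tau_i=1$; $(\pi_i-\pi_{i+1})\tau_i=\tau_i(\pi_i-\pi_{i+1})$; $(\pi_i^2-\pi_{i+1}^2)\tau_i+\tau_i(\pi_i^2-\pi_{i+1}^2)=2(\pi_i-\pi_{i+1})$; $F_i\pi_i+\pi_{i+1}F_i=0$; $F_i\pi_{i+1}+\pi_iF_i=0$; and $F_i^2=\pi_i^2+\pi_{i+1}^2-(\pi_i^2-\pi_{i+1}^2)^2$.
   Context: $\mathfrak A_n$ is the $\mathbb C$-algebra generated by $\tau_1,\dots,\tau_{n-1}$ with relations $\tau_k^2=1$, $(\tau_k\tau_{k+1})^3=1$, $(\tau_k\tau_l)^2=-1$ for $|k-l|>1$. Set $\tau_{i,i+1}=\tau_i$, $\tau_{ij}=-\tau_{i,j-1}\tau_{j-1}\tau_{i,j-1}$ for $i<j-1$, $\tau_{ji}=-\tau_{ij}$, and $\pi_k=\tau_{1k}+\dots+\tau_{k-1,k}$ ($\pi_1=0$). *)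

(* Defs.v *)
From HB Require Import structures.
From mathcomp Require Import all_boot all_order all_algebra all_field.
Set Implicit Arguments. Unset Strict Implicit. Unset Printing Implicit Defensive.
Import GRing.Theory.
Local Open Scope ring_scope.

Section AlgA.
Variable A : algType algC.

(* t k stands for the generator tau_k, meaningful for 1 <= k <= n-1. *)
Definition A_rels (n : nat) (t : nat -> A) : Prop :=
  [/\ (forall k, (1 <= k)%N -> (k <= n.-1)%N -> t k * t k = 1),
      (forall k, (1 <= k)%N -> (k.+1 <= n.-1)%N -> (t k * t k.+1) ^+ 3 = 1) &
      (forall k l, (1 <= k)%N -> (k <= n.-1)%N -> (1 <= l)%N -> (l <= n.-1)%N ->
         (k.+1 < l)%N \/ (l.+1 < k)%N -> (t k * t l) ^+ 2 = -1)].

(* tauD t i d = tau_{i, i+d+1} *)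
Fixpoint tauD (t : nat -> A) (i d : nat) : A :=
  match d with
  | 0 => t i
  | d'.+1 => - (tauD t i d' * t (i + d'.+1)%N * tauD t i d')
  end.

(* tau_{ij}, with tau_{ji} = - tau_{ij}; tau_{ii} is not used (set to 0). *)
Definition tauA (t : nat -> A) (i j : nat) : A :=
  if (i < j)%N then tauD t i (j - i).-1
  else if (j < i)%N then - tauD t j (i - j).-1 else 0.

Definition piA (t : nat -> A) (k : nat) : A := \sum_(1 <= i < k) tauA t i k.

End AlgA.

(* Main.v *)
Require Import Defs.
From HB Require Import structures.
From mathcomp Require Import all_boot all_order all_algebra all_field.
Import GRing.Theory.
Local Open Scope ring_scope.
Lemma subBB (R : zmodType) (a b c : R) : (a - b) - (a - c) = c - b.
Proof. by rewrite opprB addrC addrA subrK. Qed.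
Lemma subBr (R : zmodType) (a b c : R) : a - (b - c) = a - b + c.
Proof. by rewrite opprB addrCA [LHS]addrC. Qed.

Lemma h3 (R : zmodType) (c x y : R) : (c + x) - (- c + y) + (y - x) = c + c.
Proof. rewrite opprD opprK -addrA [c - y + _]addrA subrK addrACA subrr addr0. done. Qed.

Lemma h4 (R : zmodType) (X Y P Q : R) : X + (Y - P) + ((P - Q - X) + (Q - Y)) = 0.
Proof. by rewrite -!addrA addKr [- Q + _]addrCA addKr [Y + _]addrCA subrr addr0 subrr. Qed.

Lemma h5 (R : zmodType) (X Y P Q : R) : X + (Q - Y) + ((P - Q - X) + (Y - P)) = 0.
Proof. rewrite -!addrA [- Q + _]addrCA [P + _]addrCA [- Y + _]addrCA [Q + _]addrCA addNKr.
rewrite [P + _]addrCA [- Y + _]addrCA addNKr [P + _]addrCA subrr addr0 addNr. done. Qed.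
Lemma h7 (R : zmodType) (Y P Q : R) : (Q - Y) - (- Y - P) = P + Q.
Proof. by rewrite opprB opprK addrCA subrK. Qed.

Lemma h6 (R : zmodType) (X M C Z : R) : M + M = - X - Z -> X + M + (M + C) = C - Z.
Proof. by move=> H; rewrite -addrA (addrA M) H addrA addrA subrr add0r addrC. Qed.

Lemma final_alg (R : ringType) (p q s : R) :
  s * s = 1 -> s * p + q * s = 1 -> p * q + q * p = 0 ->
  let F := s * (p ^+ 2 - q ^+ 2) + (q - p) in
  [/\ s * p + q * s = 1,
      (p - q) * s = s * (p - q),
      (p ^+ 2 - q ^+ 2) * s + s * (p ^+ 2 - q ^+ 2) = 2%:R * (p - q) &
      [/\ F * p + q * F = 0,
           F * q + p * F = 0 &
           F ^+ 2 = p ^+ 2 + q ^+ 2 - (p ^+ 2 - q ^+ 2) ^+ 2]].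
Proof.
move=> Hs H1 H0 F.
have e1 : q * s = 1 - s * p by rewrite -H1 [s * p + _]addrC addrK.
have e2 : p * s + s * q = 1.
  have : s * (s * p + q * s) * s = 1 by rewrite H1 mulr1 Hs.
  by rewrite mulrDr mulrDl !mulrA Hs mul1r -!mulrA Hs mulr1.
have e3 : p * s = 1 - s * q by rewrite -e2 addrK.
have e4 : s * p = 1 - q * s by rewrite -H1 addrK.
have aq : q * p = - (p * q) by apply/eqP; rewrite -addr_eq0 addrC H0.
have P2 : (p - q) * s = s * (p - q).
  by rewrite mulrBl mulrBr e3 e1 subBB.
have p2s : p ^+ 2 * s = p - q + s * q ^+ 2.
  by rewrite expr2 -mulrA e3 mulrBr mulr1 mulrA e3 mulrBl mul1r -mulrA -expr2 subBr.
have q2s : q ^+ 2 * s = q - p + s * p ^+ 2.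
  by rewrite expr2 -mulrA e1 mulrBr mulr1 mulrA e1 mulrBl mul1r -mulrA -expr2 subBr.
set D := p ^+ 2 - q ^+ 2.
have P3 : D * s + s * D = 2%:R * (p - q).
  by rewrite /D mulrBl p2s q2s mulrBr -[q - p]opprB h3 mulr_natl mulr2n.
have q2p : q ^+ 2 * p = p * q ^+ 2.
  by rewrite expr2 -mulrA aq mulrN (mulrA q p q) aq mulNr opprK mulrA.
have p2q : p ^+ 2 * q = q * p ^+ 2.
  have aq' : p * q = - (q * p) by rewrite aq opprK.
  by rewrite expr2 -mulrA aq' mulrN (mulrA p q p) aq' mulNr opprK mulrA.
have Dp : D * p = p * D by rewrite /D mulrBl mulrBr q2p -exprSr -exprS.
have Dq : D * q = q * D by rewrite /D mulrBl mulrBr p2q -exprSr -exprS.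
have FE : F = s * D + (q - p) by [].
have DE : D = p ^+ 2 - q ^+ 2 by [].
clearbody D F.
split => //; split.
- rewrite FE mulrDl mulrDr -mulrA Dp mulrA (mulrA q s) e1 mulrBl.
  by rewrite mulrBl mul1r mulrBr DE !expr2 h4.
- rewrite FE mulrDl mulrDr -mulrA Dq mulrA (mulrA p s) e3 mulrBl.
  by rewrite mulrBl mul1r mulrBr DE !expr2 h5.
have cs : (q - p) * s = s * (q - p) by rewrite -opprB mulNr P2 mulrN.
have Dc : D * (q - p) = (q - p) * D by rewrite mulrBr mulrBl Dq Dp.
have m1 : s * D * (q - p) = s * (q - p) * D by rewrite -mulrA Dc mulrA.
have m2 : (q - p) * (s * D) = s * (q - p) * D by rewrite mulrA cs.
have m3 : s * (q - p) * D + s * (q - p) * D = - (s * D * (s * D)) - D * D.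
  rewrite -mulrDl -mulrDr -opprB -opprD -mulr2n -mulr_natl -P3.
  by rewrite mulrN mulNr mulrDr mulrDl opprD !mulrA Hs mul1r.
have cc : (q - p) * (q - p) = p ^+ 2 + q ^+ 2.
  by rewrite mulrBr !mulrBl aq h7 !expr2.
rewrite FE expr2 mulrDl (mulrDr (s * D) (s * D)) (mulrDr (q - p) (s * D)) m1 m2 cc.
by rewrite (expr2 D) (@h6 _ _ _ _ _ m3).
Qed.
Ltac nrm := repeat progress rewrite ?mulrN ?mulNr ?opprK ?mulrA.

Lemma inv_uniq (R : ringType) (x y z : R) : x * y = 1 -> y * z = 1 -> x = z.
Proof. by move=> h1 h2; rewrite -[x]mulr1 -h2 mulrA h1 mul1r. Qed.

Lemma ctx2 {R : ringType} {a b w : R} : a * b = w -> forall x, x * a * b = x * w.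
Proof. by move=> H x; rewrite -H mulrA. Qed.
Lemma ctx3 {R : ringType} {a b c w : R} : a * b * c = w -> forall x, x * a * b * c = x * w.
Proof. by move=> H x; rewrite -H !mulrA. Qed.
Lemma ctx4 {R : ringType} {a b c d w : R} : a * b * c * d = w -> forall x, x * a * b * c * d = x * w.
Proof. by move=> H x; rewrite -H !mulrA. Qed.

Lemma lepred m n : (m < n)%N -> (m <= n.-1)%N.
Proof. by move=> h; rewrite -ltnS prednK // (leq_ltn_trans (leq0n m) h). Qed.

Lemma L_tt {n} {A : algType algC} {t : nat -> A} : A_rels n t ->
  forall k, (1 <= k)%N -> (k <= n.-1)%N -> t k * t k = 1.
Proof. by case. Qed.

Lemma L_br {n} {A : algType algC} {t : nat -> A} : A_rels n t ->
  forall k, (1 <= k)%N -> (k.+1 <= n.-1)%N -> t k * t k.+1 * t k = t k.+1 * t k * t k.+1.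
Proof.
move=> H k h1 h2; have [_ H3 _] := H.
have ha := L_tt H _ h1 (ltnW h2).
have hb := L_tt H _ (ltn0Sn k) h2.
apply: (@inv_uniq _ _ (t k.+1 * t k * t k.+1)).
  by have := H3 k h1 h2; rewrite !exprS expr0 mulr1 !mulrA.
by rewrite !mulrA (ctx2 hb) mulr1 (ctx2 ha) mulr1 hb.
Qed.

Lemma L_anti {n} {A : algType algC} {t : nat -> A} : A_rels n t ->
  forall k l, (1 <= k)%N -> (l <= n.-1)%N -> (k.+1 < l)%N -> t l * t k = - (t k * t l).
Proof.
move=> H k l h1 h2 h3; have [_ _ H3] := H.
have hkn : (k <= n.-1)%N by apply: leq_trans h2; apply: ltnW; apply: ltnW.
have hl1 : (1 <= l)%N by apply: leq_trans h3.
have ha := L_tt H _ h1 hkn.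
have hb := L_tt H _ hl1 h2.
have h4 := H3 k l h1 hkn hl1 h2 (or_introl h3).
apply: inv_uniq (_ : t l * t k * (t k * t l) = 1) _.
  by rewrite !mulrA (ctx2 ha) mulr1 hb.
by rewrite mulrN !mulrA -(mulrA _ (t k)) -expr2 h4 opprK.
Qed.

Definition Tn {A : algType algC} (t : nat -> A) (j m : nat) : A := tauD t j (m - j).-1.

Lemma Tn_base {A : algType algC} (t : nat -> A) j : Tn t j j.+1 = t j.
Proof. by rewrite /Tn subSnn. Qed.

Lemma Tn_rec {A : algType algC} (t : nat -> A) j m : (j < m)%N ->
  Tn t j m.+1 = - (Tn t j m * t m * Tn t j m).
Proof.
move=> h; rewrite /Tn subSn ?(ltnW h) //=.
have e : (m - j = ((m - j).-1).+1)%N by rewrite prednK // subn_gt0.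
rewrite {1}e /= -e subnKC //; exact: ltnW.
Qed.

Lemma Tn_sq {n} {A : algType algC} {t : nat -> A} : A_rels n t ->
  forall j m, (1 <= j)%N -> (j < m)%N -> (m <= n)%N -> Tn t j m * Tn t j m = 1.
Proof.
move=> H j m; elim: m => [//|m IH] hj hjm hm.
have hmn : (m <= n.-1)%N by apply: lepred.
rewrite ltnS leq_eqVlt in hjm; case/orP: hjm => [/eqP e|hjm]; first subst j.
  by rewrite Tn_base (L_tt H _ hj hmn).
have hm1 : (1 <= m)%N by apply: leq_trans hjm.
have ha := IH hj hjm (ltnW hm).
have hs := L_tt H _ hm1 hmn.
by rewrite Tn_rec // mulrNN !mulrA (ctx2 ha) mulr1 (ctx2 hs) mulr1 ha.
Qed.

Lemma Tn_anti {n} {A : algType algC} {t : nat -> A} : A_rels n t ->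
  forall j m l, (1 <= j)%N -> (j < m)%N -> (m < l)%N -> (l <= n.-1)%N ->
  t l * Tn t j m = - (Tn t j m * t l).
Proof.
move=> H j m l; elim: m => [//|m IH] hj hjm hml hl.
rewrite ltnS leq_eqVlt in hjm; case/orP: hjm => [/eqP e|hjm]; first subst j.
  by rewrite Tn_base (L_anti H).
have hm1 : (1 <= m)%N by apply: leq_trans hjm.
have ha := IH hj hjm (ltnW hml) hl.
have hs := L_anti H _ _ hm1 hl hml.
rewrite Tn_rec // mulrN mulNr opprK !mulrA ha mulNr (ctx2 hs) mulrN !mulrA.
by nrm; rewrite (ctx2 ha); nrm.
Qed.

Lemma Tn_braid {n} {A : algType algC} {t : nat -> A} : A_rels n t ->
  forall j m, (1 <= j)%N -> (j < m)%N -> (m <= n.-1)%N ->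
  Tn t j m * t m * Tn t j m = t m * Tn t j m * t m.
Proof.
move=> H j [//|m] hj hjm hm.
have hm1 : (m <= n.-1)%N by apply: ltnW.
rewrite ltnS leq_eqVlt in hjm; case/orP: hjm => [/eqP e|hjm]; first subst j.
  by rewrite Tn_base (L_br H).
have hmn : (m <= n)%N by apply: leq_trans hm1 (leq_pred n).
have hA := Tn_sq H _ _ hj hjm hmn.
have hu := Tn_anti H _ _ _ hj hjm (ltnSn m) hm.
have hu' : Tn t j m * t m.+1 = - (t m.+1 * Tn t j m) by rewrite hu opprK.
have hbr := L_br H _ (leq_trans hj (ltnW hjm)) hm.
rewrite Tn_rec //; nrm.
rewrite (ctx2 hu); nrm; rewrite (ctx2 hA) mulr1 (ctx3 hbr); nrm.
rewrite hu'; nrm; rewrite (ctx2 hu); nrm. done.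
Qed.

Lemma Tn_rec2 {n} {A : algType algC} {t : nat -> A} : A_rels n t ->
  forall j m, (1 <= j)%N -> (j < m)%N -> (m <= n.-1)%N ->
  Tn t j m.+1 = - (t m * Tn t j m * t m).
Proof. by move=> H j m hj hjm hm; rewrite Tn_rec // (Tn_braid H). Qed.

Lemma Tn_L {n} {A : algType algC} {t : nat -> A} : A_rels n t ->
  forall m j k, (1 <= j)%N -> (1 <= k)%N -> (j < m)%N -> (k < m)%N -> j != k ->
  (m <= n.-1)%N ->
  Tn t j m * t m * Tn t k m * t m = - (t m * Tn t k m * t m * Tn t j m).
Proof.
move=> H; elim=> [//|m IH] j k hj hk hjm hkm hjk hm.
have hm1 : (m <= n.-1)%N by apply: ltnW.
have hmn : (m <= n)%N by apply: leq_trans hm1 (leq_pred n).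
have hm0 : (1 <= m)%N.
  by case: m {IH hm hm1 hmn} hjm hkm hjk => // ; case: j hj => //; case: k hk.
have hbr := L_br H _ hm0 hm.
have hbr' : t m.+1 * t m * t m.+1 = t m * t m.+1 * t m by rewrite hbr.
have hu := L_tt H _ (ltn0Sn m) hm.
have ht := L_tt H _ hm0 hm1.
rewrite ltnS leq_eqVlt in hjm; rewrite ltnS leq_eqVlt in hkm.
case/orP: hjm => [/eqP ej|hjm].
  subst j; case/orP: hkm => [/eqP ek|hkm]; first by rewrite ek eqxx in hjk.
  have hC := Tn_anti H _ _ _ hk hkm (ltnSn m) hm.
  rewrite Tn_base (Tn_rec2 H _ _ hk hkm hm1); nrm.
  rewrite hbr (ctx2 hC); nrm; rewrite (ctx3 hbr'); nrm. done.
case/orP: hkm => [/eqP ek|hkm].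
  subst k.
  have hA := Tn_anti H _ _ _ hj hjm (ltnSn m) hm.
  rewrite Tn_base (Tn_rec2 H _ _ hj hjm hm1); nrm.
  rewrite [in X in X = _](ctx3 hbr); nrm; rewrite (ctx2 hu) mulr1; nrm.
  rewrite hbr' (ctx2 ht) mulr1 (ctx2 hA); nrm. done.
have hA := Tn_anti H _ _ _ hj hjm (ltnSn m) hm.
have hA' : Tn t j m * t m.+1 = - (t m.+1 * Tn t j m) by rewrite hA opprK.
have hC := Tn_anti H _ _ _ hk hkm (ltnSn m) hm.
have hC' : Tn t k m * t m.+1 = - (t m.+1 * Tn t k m) by rewrite hC opprK.
have IHm := IH j k hj hk hjm hkm hjk hm1.
rewrite (Tn_rec2 H _ _ hj hjm hm1) (Tn_rec2 H _ _ hk hkm hm1); nrm.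
rewrite [in X in X = _](ctx3 hbr); nrm; rewrite (ctx2 hA'); nrm; rewrite (ctx2 hC); nrm.
rewrite (ctx3 hbr'); nrm; rewrite (ctx4 IHm); nrm; rewrite hbr; nrm.
rewrite [in X in _ = X](ctx3 hbr); nrm; rewrite (ctx2 hC'); nrm; rewrite (ctx2 hA); nrm.
done.
Qed.

Lemma key_sum {n} {A : algType algC} {t : nat -> A} : A_rels n t ->
  forall i, (1 <= i)%N -> (i <= n.-1)%N ->
  let p := \sum_(1 <= j < i) Tn t j i in
  p * (t i * p * t i) + (t i * p * t i) * p = p * t i + t i * p.
Proof.
move=> H i hi1 hi2 p.
have hs := L_tt H _ hi1 hi2.
set X := t i * p * t i.
have -> : p * X + X * p = \sum_(1 <= j < i) (Tn t j i * X + X * Tn t j i).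
  by rewrite big_split /= -mulr_suml -mulr_sumr.
have -> : p * t i + t i * p = \sum_(1 <= j < i) (Tn t j i * t i + t i * Tn t j i).
  by rewrite big_split /= -mulr_suml -mulr_sumr.
apply: eq_big_nat => j /andP [hj1 hji].
have -> : Tn t j i * X + X * Tn t j i = \sum_(1 <= k < i)
   (Tn t j i * (t i * Tn t k i * t i) + (t i * Tn t k i * t i) * Tn t j i).
  by rewrite big_split /= -mulr_suml -mulr_sumr /X /p -mulr_suml -mulr_sumr.
rewrite (bigD1_seq j) /=; last by rewrite /index_iota iota_uniq.
  2: by rewrite mem_index_iota hj1 hji.
rewrite big1_seq ?addr0.
  have hb := Tn_braid H _ _ hj1 hji hi2.
  rewrite !mulrA hb; nrm; rewrite (ctx3 hb); nrm; rewrite (ctx2 hs) mulr1 hs mul1r addrC. done.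
move=> k /andP [hkj]; rewrite mem_index_iota => /andP [hk1 hki].
have hjk : j != k by rewrite eq_sym.
have hL := Tn_L H _ _ _ hj1 hk1 hji hki hjk hi2.
by rewrite !mulrA hL addNr.
Qed.

Lemma h8 (R : zmodType) (a b c d : R) : b + d = a + c -> (a - b) + (c - d) = 0.
Proof. by move=> h; rewrite addrACA -opprD h subrr. Qed.

Lemma tauA_lt {A : algType algC} (t : nat -> A) j m : (j < m)%N -> tauA t j m = Tn t j m.
Proof. by move=> h; rewrite /tauA h. Qed.

Theorem mainTheorem18 (n : nat) (A : algType algC) (t : nat -> A)
  (Hrel : A_rels n t) (i : nat) (Hi1 : (1 <= i)%N) (Hi2 : (i <= n.-1)%N) :
  let p := piA t i in
  let q := piA t i.+1 in
  let F := t i * (p ^+ 2 - q ^+ 2) + (q - p) in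
  [/\ t i * p + q * t i = 1,
      (p - q) * t i = t i * (p - q),
      (p ^+ 2 - q ^+ 2) * t i + t i * (p ^+ 2 - q ^+ 2) = 2%:R * (p - q) &
      [/\ F * p + q * F = 0,
           F * q + p * F = 0 &
           F ^+ 2 = p ^+ 2 + q ^+ 2 - (p ^+ 2 - q ^+ 2) ^+ 2]].
Proof.
move=> p q F.
have hs := L_tt Hrel _ Hi1 Hi2.
have hp : p = \sum_(1 <= j < i) Tn t j i.
  by rewrite /p /piA; apply: eq_big_nat => j /andP [_ hj]; rewrite tauA_lt.
have hq : q = t i - t i * p * t i.
  rewrite /q /piA big_nat_recr // (tauA_lt _ _ _ (ltnSn i)) Tn_base addrC.
  congr (_ + _).
  rewrite hp mulr_sumr mulr_suml -sumrN.
  apply: eq_big_nat => j /andP [hj1 hj]; rewrite tauA_lt; last exact: ltnW.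
  exact: (Tn_rec2 Hrel).
have hX : p * (t i * p * t i) + (t i * p * t i) * p = p * t i + t i * p.
  by rewrite hp; exact: (key_sum Hrel).
have H1 : t i * p + q * t i = 1.
  by rewrite hq mulrBl hs (ctx2 hs) mulr1 addrCA subrr addr0.
have H0 : p * q + q * p = 0.
  by rewrite hq mulrBr mulrBl; apply: h8; rewrite hX addrC.
rewrite /F; exact: (@final_alg _ p q (t i) hs H1 H0).
Qed.
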